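(* Let $\mathfrak{g}$ be a finite-dimensional Leibniz algebra, $\mathfrak{b}$ a two-sided ideal of $\mathfrak{g}$, and $\mathfrak{a}\cong\mathfrak{g}/\mathfrak{b}$. Then $$\dim\mathcal{M}^{\mathrm{Lie}}(\mathfrak{a})\le\dim\mathcal{M}^{\mathrm{Lie}}(\mathfrak{g})+\dim\big([\mathfrak{g},\mathfrak{g}]_{\mathrm{Lie}}\cap\mathfrak{b}\big).$$
   Context: Fix a field $\mathbb{K}$ with $\frac12\in\mathbb{K}$. A Leibniz algebra is a $\mathbb{K}$-vector space with a bilinear bracket satisfying $[x,[y,z]]=[[x,y],z]-[[x,z],y]$. For two-sided ideals $\mathfrak{m},\mathfrak{n}$, $[\mathfrak{m},\mathfrak{n}]_{\mathrm{Lie}}$ is the subspace spanned by all $[m,n]+[n,m]$, $m\in\mathfrak{m},n\in\mathfrak{n}$. For a Leibniz algebra $\mathfrak{g}$ with a free presentation $0\to\mathfrak{r}\to\mathfrak{f}\to\mathfrak{g}\to0$ ($\mathfrak{f}$ a free Leibniz algebra), the Schur $\mathrm{Lie}$-multiplier is $\mathcal{M}^{\mathrm{Lie}}(\mathfrak{g})=\frac{\mathfrak{r}\cap[\mathfrak{f},\mathfrak{f}]_{\mathrm{Lie}}}{[\mathfrak{f},\mathfrak{r}]_{\mathrm{Lie}}}$, independent of the presentation up to isomorphism. *)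

(* Defs.v *)
From mathcomp Require Import all_boot all_algebra.
From Stdlib Require Import ClassicalEpsilon.
Set Implicit Arguments. Unset Strict Implicit. Unset Printing Implicit Defensive.
Import GRing.Theory.
Local Open Scope ring_scope.

Record leibniz (K : fieldType) := Leibniz {
  lcar :> lmodType K;
  lbr : lcar -> lcar -> lcar;
  lbr_linl : forall (c : K) (x y z : lcar), lbr (c *: x + y) z = c *: lbr x z + lbr y z;
  lbr_linr : forall (c : K) (x y z : lcar), lbr x (c *: y + z) = c *: lbr x y + lbr x z;
  lbr_leib : forall x y z : lcar,
      lbr x (lbr y z) = lbr (lbr x y) z - lbr (lbr x z) y }.

Section Defs.
Variable K : fieldType.

Definition in_span (V : lmodType K) (S : V -> Prop) (v : V) : Prop :=
  exists (n : nat) (u : 'I_n -> V) (c : 'I_n -> K),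
    (forall i, S (u i)) /\ v = \sum_(i < n) c i *: u i.

Definition is_subspace (V : lmodType K) (U : V -> Prop) : Prop :=
  U 0 /\ forall (c : K) x y, U x -> U y -> U (c *: x + y).

Definition is_ideal (L : leibniz K) (I : L -> Prop) : Prop :=
  is_subspace I /\ forall x y : L, I y -> I (lbr x y) /\ I (lbr y x).

Definition lie_comm (L : leibniz K) (M N : L -> Prop) : L -> Prop :=
  in_span (fun v => exists m n, M m /\ N n /\ v = lbr m n + lbr n m).

Definition is_hom (L1 L2 : leibniz K) (phi : L1 -> L2) : Prop :=
  (forall (c : K) (x y : L1), phi (c *: x + y) = c *: phi x + phi y) /\
  (forall x y : L1, phi (lbr x y) = lbr (phi x) (phi y)).

Definition is_free (f : leibniz K) (X : Type) (i : X -> f) : Prop :=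
  forall (L : leibniz K) (h : X -> L),
    exists phi : f -> L, [/\ is_hom phi, (forall x, phi (i x) = h x) &
      (forall psi : f -> L, is_hom psi -> (forall x, psi (i x) = h x) ->
         forall v, psi v = phi v)].

(* a free presentation 0 -> r -> f -> g -> 0, with r = ker pi *)
Definition free_presentation (f g : leibniz K) (pi : f -> g) : Prop :=
  [/\ exists (X : Type) (i : X -> f), is_free i,
      is_hom pi &
      forall y : g, exists x : f, pi x = y].

Definition kernel (L1 L2 : leibniz K) (pi : L1 -> L2) : L1 -> Prop :=
  fun v => pi v = 0.

(* "dim (U / W) <= n": U is spanned modulo W by n vectors of U *)
Definition qdim_le (V : lmodType K) (U W : V -> Prop) (n : nat) : Prop :=
  exists u : 'I_n -> V, (forall i, U (u i)) /\
    forall v, U v -> exists (c : 'I_n -> K) (w : V),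
      W w /\ v = \sum_(i < n) c i *: u i + w.

(* dim (U / W) as a natural number: the least such n (junk value if infinite) *)
Definition qdim (V : lmodType K) (U W : V -> Prop) : nat :=
  epsilon (inhabits 0%N)
    (fun n => qdim_le U W n /\ forall m, qdim_le U W m -> (n <= m)%N).

Definition zero_sub (V : lmodType K) : V -> Prop := fun v => v = 0.
Definition full_sub (V : lmodType K) : V -> Prop := fun _ => True.

Definition sdim (V : lmodType K) (U : V -> Prop) : nat := qdim U (@zero_sub V).

Definition findim (V : lmodType K) : Prop := exists n, qdim_le (@full_sub V) (@zero_sub V) n.

(* Schur Lie-multiplier computed from the free presentation pi : f -> g:
   M^Lie(g) = (r /\ [f,f]_Lie) / [f,r]_Lie with r = ker pi;
   schur_lie_dim pi is its dimension. *)
Definition schur_lie_num (f g : leibniz K) (pi : f -> g) : f -> Prop :=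
  fun v => kernel pi v /\ lie_comm (@full_sub f) (@full_sub f) v.
Definition schur_lie_den (f g : leibniz K) (pi : f -> g) : f -> Prop :=
  lie_comm (@full_sub f) (kernel pi).
Definition schur_lie_dim (f g : leibniz K) (pi : f -> g) : nat :=
  qdim (schur_lie_num pi) (schur_lie_den pi).

End Defs.

(* Main.v *)
Require Import Defs.
From mathcomp Require Import all_boot all_algebra.
From Stdlib Require Import ClassicalEpsilon Classical.
Set Implicit Arguments. Unset Strict Implicit. Unset Printing Implicit Defensive.
Import GRing.Theory.
Local Open Scope ring_scope.


Section LinAlg.
Variable K : fieldType.

Definition lin (V W : lmodType K) (f : V -> W) :=
  forall (c : K) x y, f (c *: x + y) = c *: f x + f y.

Section LinF.
Variables (V W : lmodType K) (f : V -> W) (hf : lin f).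
Lemma lin0 : f 0 = 0.
Proof.
by have := hf (-1) 0 0; rewrite scaler0 addr0 scaleN1r addNr.
Qed.
Lemma linD x y : f (x + y) = f x + f y.
Proof. by have := hf 1 x y; rewrite !scale1r. Qed.
Lemma linZ c x : f (c *: x) = c *: f x.
Proof. by have := hf c x 0; rewrite !addr0 lin0 addr0. Qed.
Lemma linN x : f (- x) = - f x.
Proof. by rewrite -scaleN1r linZ scaleN1r. Qed.
Lemma linB x y : f (x - y) = f x - f y.
Proof. by rewrite linD linN. Qed.
Lemma lin_sum (I : finType) (c : I -> K) (u : I -> V) :
  f (\sum_(i : I) c i *: u i) = \sum_(i : I) c i *: f (u i).
Proof.
rewrite (big_morph f linD lin0); apply: eq_bigr => i _; exact: linZ.
Qed.
End LinF.

Lemma lin_comp (U V W : lmodType K) (f : V -> W) (g : U -> V) :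
  lin f -> lin g -> lin (fun x => f (g x)).
Proof. by move=> hf hg c x y; rewrite hg hf. Qed.

Section Span.
Variable V : lmodType K.
Implicit Types U W S T : V -> Prop.

Lemma sub0 U : is_subspace U -> U 0. Proof. by case. Qed.
Lemma subD U x y : is_subspace U -> U x -> U y -> U (x + y).
Proof. by move=> [_ h] hx hy; have := h 1 x y hx hy; rewrite scale1r. Qed.
Lemma subZ U c x : is_subspace U -> U x -> U (c *: x).
Proof. by move=> [h0 h] hx; have := h c x 0 hx h0; rewrite addr0. Qed.
Lemma subN U x : is_subspace U -> U x -> U (- x).
Proof. by move=> hU hx; rewrite -scaleN1r; apply: subZ. Qed.
Lemma subB U x y : is_subspace U -> U x -> U y -> U (x - y).
Proof. by move=> hU hx hy; apply: subD => //; apply: subN. Qed.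
Lemma sub_sum U (I : finType) (c : I -> K) (u : I -> V) :
  is_subspace U -> (forall i, U (u i)) -> U (\sum_(i : I) c i *: u i).
Proof.
move=> hU hu; apply: (big_ind U); first exact: sub0.
  by move=> x y; apply: subD.
by move=> i _; apply: subZ.
Qed.
Lemma sub_and U W : is_subspace U -> is_subspace W -> is_subspace (fun x => U x /\ W x).
Proof.
move=> [hU0 hU] [hW0 hW]; split => // c x y [? ?] [? ?]; split; [exact: hU|exact: hW].
Qed.
Lemma sub_pre (V' : lmodType K) (f : V' -> V) U :
  lin f -> is_subspace U -> is_subspace (fun x => U (f x)).
Proof.
move=> hf [hU0 hU]; split; first by rewrite lin0.
by move=> c x y hx hy; rewrite hf; apply: hU.
Qed.

Lemma sum_enumv (I : finType) (F : I -> V) :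
  \sum_(i : I) F i = \sum_(k < #|I|) F (enum_val k).
Proof. rewrite -(big_enum_val (A := I)). by apply: eq_bigl => i; rewrite inE. Qed.

Lemma in_spanT S (I : finType) (c : I -> K) (u : I -> V) :
  (forall i, S (u i)) -> in_span S (\sum_(i : I) c i *: u i).
Proof.
move=> hu; exists #|I|, (fun k => u (enum_val k)), (fun k => c (enum_val k)).
split => //; exact: sum_enumv.
Qed.

Lemma span_sub S x : S x -> in_span S x.
Proof.
move=> hx; have := @in_spanT S _ (fun _ : 'I_1 => 1) (fun _ => x) (fun _ => hx).
by rewrite big_ord1 scale1r.
Qed.

Lemma span_subspace S : is_subspace (in_span S).
Proof.
split.
  exists 0%N, (fun _ => 0), (fun _ => 0); split; [by case | by rewrite big_ord0].
move=> c x y [n [u [a [hu ->]]]] [m [u' [a' [hu' ->]]]].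
pose F := fun k : 'I_n + 'I_m => match k with inl i => u i | inr j => u' j end.
pose C := fun k : 'I_n + 'I_m => match k with inl i => c * a i | inr j => a' j end.
have := @in_spanT S _ C F; rewrite big_sumType /= scaler_sumr.
have -> : \sum_(i < n) c *: (a i *: u i) = \sum_(i < n) (c * a i) *: u i.
  by apply: eq_bigr => i _; rewrite scalerA.
by apply; case.
Qed.

Lemma span_min S U x : is_subspace U -> (forall y, S y -> U y) -> in_span S x -> U x.
Proof. by move=> hU hS [n [u [c [hu ->]]]]; apply: sub_sum => // i; apply: hS. Qed.

Definition spanT (I : finType) (v : I -> V) W x :=
  exists (c : I -> K) w, W w /\ x = \sum_(i : I) c i *: v i + w.

Lemma spanT_subspace (I : finType) (v : I -> V) W :
  is_subspace W -> is_subspace (spanT v W).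
Proof.
move=> hW; split.
  exists (fun _ => 0), 0; split; first exact: sub0.
  by rewrite big1 ?addr0 // => i _; rewrite scale0r.
move=> c x y [a [w [hw ->]]] [a' [w' [hw' ->]]].
exists (fun i => c * a i + a' i), (c *: w + w'); split; first by case: hW => _; apply.
rewrite scalerDr scaler_sumr addrACA -big_split /=; congr (_ + _).
by apply: eq_bigr => i _; rewrite scalerA scalerDl.
Qed.

Lemma spanT_W (I : finType) (v : I -> V) W x : W x -> spanT v W x.
Proof.
move=> hx; exists (fun _ => 0), x; split => //.
by rewrite big1 ?add0r // => i _; rewrite scale0r.
Qed.

Lemma spanT_v (I : finType) (v : I -> V) W k : is_subspace W -> spanT v W (v k).
Proof.
move=> hW; exists (fun i => if i == k then 1 else 0), 0; split; first exact: sub0.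
rewrite addr0 (bigD1 k) //= eqxx scale1r big1 ?addr0 // => i /negbTE ->.
by rewrite scale0r.
Qed.

Lemma qdim_leT U W (I : finType) (u : I -> V) :
  (forall i, U (u i)) -> (forall x, U x -> spanT u W x) -> qdim_le U W #|I|.
Proof.
move=> hu hs; exists (fun k => u (enum_val k)); split => // x /hs [c [w [hw ->]]].
exists (fun k => c (enum_val k)), w; split => //.
by rewrite sum_enumv.
Qed.

End Span.

Lemma span_map (V V' : lmodType K) (f : V -> V') S (T : V' -> Prop) x :
  lin f -> (forall y, S y -> T (f y)) -> in_span S x -> in_span T (f x).
Proof.
move=> hf hST; apply: (span_min (U := fun x => in_span T (f x))).
  exact: sub_pre hf (span_subspace T).
by move=> y /hST; apply: span_sub.
Qed.

Lemma span_mono (V : lmodType K) (S T : V -> Prop) x : (forall y, S y -> T y) -> in_span S x -> in_span T x.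
Proof. by move=> h; apply: (@span_map V V id) => //. Qed.

End LinAlg.


Section L1.
Variable K : fieldType.
Variable V : lmodType K.

Lemma L1 N (v : 'I_N -> V) (U W : V -> Prop) :
  is_subspace U -> is_subspace W -> (forall x, U x -> spanT v W x) ->
  exists n, (n <= N)%N /\ qdim_le U W n.
Proof.
elim: N v U => [|N IH] v U hU hW hs.
  exists 0%N; split => //; exists (fun _ => 0); split; first by case.
  move=> x /hs [c [w [hw ->]]]; exists c, w; split => //; by rewrite !big_ord0.
pose v' := fun i : 'I_N => v (widen_ord (leqnSn N) i).
pose z := v ord_max.
have rec : forall x, spanT v W x -> exists d, spanT v' W (x - d *: z) /\
     (~ spanT v' W x -> d != 0).
  move=> x [c [w [hw ->]]]; exists (c ord_max); split.
    exists (fun i => c (widen_ord (leqnSn N) i)), w; split => //.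
    by rewrite big_ord_recr /= addrAC addrK.
  apply: contra_notN => /eqP h0; exists (fun i => c (widen_ord (leqnSn N) i)), w.
  by split => //; rewrite big_ord_recr /= h0 scale0r addr0.
case: (classic (forall x, U x -> spanT v' W x)) => [hall|].
  by have [n [hn hq]] := IH v' U hU hW hall; exists n; split => //; apply: leqW.
move=> /not_all_ex_not [x0 hxx]; have [hx0 hnx0] := imply_to_and _ _ hxx; clear hxx.
have [c0 [hc0 /(_ hnx0) nz]] := rec _ (hs _ hx0).
pose U' := fun x => U x /\ spanT v' W x.
have hU' : is_subspace U' by apply: sub_and => //; apply: spanT_subspace.
have [n [hn [u [hu hsu]]]] := IH v' U' hU' hW (fun x (hx : U' x) => proj2 hx).
exists n.+1; split => //.
pose F := fun k : 'I_n + 'I_1 => match k with inl i => u i | inr _ => x0 end.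
suff : qdim_le U W #|{: 'I_n + 'I_1}| by rewrite card_sum !card_ord addn1.
apply: (qdim_leT (u := F)); first by case => [i|_] //=; case: (hu i).
move=> x hx.
have [d [hd _]] := rec _ (hs _ hx).
pose t := d / c0.
have hy : U' ((- t) *: x0 + x).
  split; first by case: hU => _; apply.
  have -> : (- t) *: x0 + x = (- t) *: (x0 - c0 *: z) + (x - d *: z).
    rewrite scalerBr scalerA /t mulNr divfK // !scaleNr !opprK.
    by rewrite addrACA subrr addr0.
  by have [_ h] := spanT_subspace v' hW; apply: h.
have [e [w [hw he]]] := hsu _ hy.
exists (fun k => match k with inl i => e i | inr _ => t end), w; split => //.
rewrite big_sumType /= big_ord1 /=.
have -> : x = (- t) *: x0 + x + t *: x0 by rewrite addrAC scaleNr addNr add0r.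
by rewrite he addrAC.
Qed.

Lemma least_ex (P : nat -> Prop) : (exists n, P n) -> exists n, P n /\ forall m, P m -> (n <= m)%N.
Proof.
move=> hex.
pose Pb := fun n => if excluded_middle_informative (P n) then true else false.
have hPb : forall n, Pb n <-> P n.
  by move=> n; rewrite /Pb; case: excluded_middle_informative.
have exb : exists n, Pb n by case: hex => n /hPb; exists n.
case: (ex_minnP exb) => n /hPb hn hmin; exists n; split => // m /hPb; exact: hmin.
Qed.

Lemma qdimP (U W : V -> Prop) : (exists n, qdim_le U W n) ->
  qdim_le U W (qdim U W) /\ forall m, qdim_le U W m -> (qdim U W <= m)%N.
Proof.
move=> /least_ex hex; exact: (epsilon_spec _ _ hex).
Qed.

End L1.


Section Leib.
Variable K : fieldType.

Lemma lbr_l (L : leibniz K) (z : L) : lin (fun x : L => lbr x z).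
Proof. by move=> c x y; apply: lbr_linl. Qed.
Lemma lbr_r (L : leibniz K) (x : L) : lin (lbr x).
Proof. by move=> c y z; apply: lbr_linr. Qed.

Definition sym (L : leibniz K) (m n : L) := lbr m n + lbr n m.

Lemma symC (L : leibniz K) (m n : L) : sym m n = sym n m.
Proof. by rewrite /sym addrC. Qed.

Lemma sym_r (L : leibniz K) (m : L) : lin (sym m).
Proof.
move=> c x y; rewrite /sym lbr_linr lbr_linl scalerDr.
by rewrite addrACA.
Qed.
Lemma sym_l (L : leibniz K) (n : L) : lin (fun m => sym m n).
Proof. by move=> c x y; rewrite !(symC _ n) sym_r. Qed.

Lemma sym_comm (L : leibniz K) (M N : L -> Prop) m n :
  M m -> N n -> lie_comm M N (sym m n).
Proof. by move=> hm hn; apply: span_sub; exists m, n. Qed.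

Lemma lie_comm_sub (L : leibniz K) (M N : L -> Prop) : is_subspace (lie_comm M N).
Proof. exact: span_subspace. Qed.

Lemma hom_lin (L1 L2 : leibniz K) (f : L1 -> L2) : is_hom f -> lin f.
Proof. by case. Qed.

Lemma hom_comp (L1 L2 L3 : leibniz K) (f : L2 -> L3) (g : L1 -> L2) :
  is_hom f -> is_hom g -> is_hom (fun x => f (g x)).
Proof. by move=> [f1 f2] [g1 g2]; split => *; rewrite ?g1 ?f1 ?g2 ?f2. Qed.

Lemma hom_sym (L1 L2 : leibniz K) (f : L1 -> L2) m n :
  is_hom f -> f (sym m n) = sym (f m) (f n).
Proof. by move=> hf; rewrite /sym (linD (hom_lin hf)); case: (hf) => _ hb; rewrite !hb. Qed.

Lemma hom_comm (L1 L2 : leibniz K) (f : L1 -> L2) (M N : L1 -> Prop) (M' N' : L2 -> Prop) v :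
  is_hom f -> (forall m, M m -> M' (f m)) -> (forall n, N n -> N' (f n)) ->
  lie_comm M N v -> lie_comm M' N' (f v).
Proof.
move=> hf hM hN; apply: span_map; first exact: hom_lin.
move=> y [m [n [hm [hn ->]]]]; exists (f m), (f n); split; first exact: hM.
split; first exact: hN.
by have := hom_sym m n hf.
Qed.

Lemma comm_onto (L1 L2 : leibniz K) (f : L1 -> L2) y :
  is_hom f -> (forall y, exists x, f x = y) ->
  lie_comm (@full_sub _ L2) (@full_sub _ L2) y ->
  exists x, lie_comm (@full_sub _ L1) (@full_sub _ L1) x /\ f x = y.
Proof.
move=> hf hs hy.
apply: (span_min (U := fun y => exists x, lie_comm (@full_sub _ L1) (@full_sub _ L1) x /\ f x = y) _ _ hy).
  split; first by exists 0; split; [exact: sub0 (lie_comm_sub _ _) | exact: lin0 (hom_lin hf)].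
  move=> c y1 y2 [x1 [h1 <-]] [x2 [h2 <-]]; exists (c *: x1 + x2); split.
    by case: (lie_comm_sub (@full_sub _ L1) (@full_sub _ L1)) => _; apply.
  by rewrite (hom_lin hf).
move=> z [m [n [_ [_ ->]]]].
have [m' <-] := hs m; have [n' <-] := hs n.
exists (sym m' n'); split; first exact: sym_comm.
exact: hom_sym.
Qed.

Lemma choice_fun (A B : Type) (P : A -> B -> Prop) :
  (forall x, exists y, P x y) -> exists f : A -> B, forall x, P x (f x).
Proof.
move=> h; exists (fun x => proj1_sig (constructive_indefinite_description _ (h x))).
by move=> x; case: constructive_indefinite_description.
Qed.

Lemma lift_hom (f L1 L2 : leibniz K) (X : Type) (i : X -> f) (q : f -> L2) (pi : L1 -> L2) :
  is_free i -> is_hom q -> is_hom pi -> (forall y, exists x, pi x = y) ->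
  exists th : f -> L1, is_hom th /\ forall v, pi (th v) = q v.
Proof.
move=> hfree hq hpi hs.
have [h hh] := choice_fun (fun t => hs (q (i t))).
have [th [hth thi _]] := hfree L1 h.
have [ph [_ _ uniq]] := hfree L2 (fun t => q (i t)).
exists th; split => // v.
rewrite (uniq (fun v => pi (th v))) ?(uniq q) //.
  exact: hom_comp.
by move=> t; rewrite thi hh.
Qed.

Lemma lift_id (f L : leibniz K) (pi : f -> L) (ph : f -> f) v :
  is_hom pi -> is_hom ph -> (forall x, pi (ph x) = pi x) ->
  lie_comm (@full_sub _ f) (@full_sub _ f) v ->
  lie_comm (@full_sub _ f) (kernel pi) (ph v - v).
Proof.
move=> hpi hph hpp hv.
apply: (span_min (U := fun v => lie_comm (@full_sub _ f) (kernel pi) (ph v - v)) _ _ hv).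
  apply: (sub_pre (f := fun v => ph v - v)); last exact: lie_comm_sub.
  move=> c x y; rewrite (hom_lin hph) scalerBr opprD addrACA.
  by rewrite addrA.
move=> y [m [n [_ [_ ->]]]].
have kd : forall x, kernel pi (ph x - x).
  by move=> x; rewrite /kernel (linB (hom_lin hpi)) hpp subrr.
rewrite -/(sym m n) (hom_sym _ _ hph).
have -> : sym (ph m) (ph n) - sym m n =
   sym (ph m - m) (ph n) + sym m (ph n - n).
  rewrite (linB (sym_l _)) (linB (sym_r _)).
  by rewrite addrA subrK.
apply: subD; first exact: lie_comm_sub.
  by rewrite symC; apply: sym_comm.
exact: sym_comm.
Qed.

End Leib.


Section Main.
Variable K : fieldType.

Lemma kernel_sub (L1 L2 : leibniz K) (pi : L1 -> L2) : is_hom pi -> is_subspace (kernel pi).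
Proof.
move=> hpi; split; first exact: lin0 (hom_lin hpi).
by move=> c x y; rewrite /kernel (hom_lin hpi) => -> ->; rewrite scaler0 addr0.
Qed.

Lemma zero_subspace (V : lmodType K) : is_subspace (@zero_sub _ V).
Proof. by split => // c x y; rewrite /zero_sub => -> ->; rewrite scaler0 addr0. Qed.

Lemma spanT_enum (V : lmodType K) (I : finType) (v : I -> V) W x :
  spanT v W x -> spanT (fun k : 'I_#|I| => v (enum_val k)) W x.
Proof.
move=> [c [w [hw ->]]]; exists (fun k => c (enum_val k)), w; split => //.
by rewrite sum_enumv.
Qed.

Lemma Mfin (f g : leibniz K) (pi : f -> g) :
  is_hom pi -> (forall y, exists x, pi x = y) -> findim g ->
  exists n, qdim_le (schur_lie_num pi) (schur_lie_den pi) n.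
Proof.
move=> hpi hs [N [e [_ he]]].
have [x hx] := choice_fun (fun j : 'I_N => hs (e j)).
have decomp : forall m, exists (a : 'I_N -> K) rho, kernel pi rho /\
    m = \sum_(j < N) a j *: x j + rho.
  move=> m; have [c [w [w0 hm]]] := he (pi m) I.
  exists c, (m - \sum_(j < N) c j *: x j); split; last by rewrite addrC subrK.
  rewrite /kernel (linB (hom_lin hpi)) (lin_sum (hom_lin hpi)).
  under eq_bigr do rewrite hx.
  by rewrite hm w0 addr0 subrr.
have dsub : forall U : f -> Prop, is_subspace U -> (forall j, U (x j)) ->
    (forall rho, kernel pi rho -> U rho) -> forall m, U m.
  move=> U hU hxj hr m; have [a [rho [hrho ->]]] := decomp m.
  by apply: subD => //; [apply: sub_sum | apply: hr].
pose P := fun k : 'I_N * 'I_N => sym (x k.1) (x k.2).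
pose W := schur_lie_den pi.
have hW : is_subspace W by apply: lie_comm_sub.
pose T := spanT P W.
have hT : is_subspace T by apply: spanT_subspace.
have claim : forall m n, T (sym m n).
  move=> m; apply: (dsub (fun m => forall n, T (sym m n))).
  - split; first by move=> n; rewrite (lin0 (sym_l _)); apply: sub0.
    move=> c m1 m2 h1 h2 n; rewrite (sym_l n).
    by case: hT => _; apply.
  - move=> j; apply: dsub.
    + exact: (sub_pre (sym_r _) hT).
    + by move=> l; exact: (spanT_v P (j, l) hW).
    + by move=> rho hrho; apply: spanT_W; apply: sym_comm.
  - by move=> rho hrho n; rewrite symC; apply: spanT_W; apply: sym_comm.
have hF : forall v, lie_comm (@full_sub _ f) (@full_sub _ f) v -> T v.
  move=> v hv; apply: (span_min hT _ hv).
  by move=> y [m [n [_ [_ ->]]]]; apply: claim.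
have [n [_ hq]] := @L1 _ _ _ (fun k => P (enum_val k)) (schur_lie_num pi) W
   (sub_and (kernel_sub hpi) (lie_comm_sub _ _)) hW
   (fun v hv => spanT_enum (hF v (proj2 hv))).
by exists n.
Qed.

Lemma sdim_fin (g : leibniz K) (U : g -> Prop) :
  is_subspace U -> findim g -> exists n, qdim_le U (@zero_sub _ g) n.
Proof.
move=> hU [N [e [_ he]]].
have [n [_ hq]] := @L1 _ _ _ e U _ hU (@zero_subspace _) (fun v _ => he v I).
by exists n.
Qed.

Lemma step3 (f g a : leibniz K) (pi : f -> g) (p : g -> a) (b : g -> Prop) n1 n2 :
  is_hom pi -> (forall y, exists x, pi x = y) -> is_hom p ->
  (forall x, p x = 0 <-> b x) ->
  qdim_le (schur_lie_num pi) (schur_lie_den pi) n1 ->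
  qdim_le (fun v : g => lie_comm (@full_sub _ g) (@full_sub _ g) v /\ b v) (@zero_sub _ g) n2 ->
  qdim_le (schur_lie_num (fun x => p (pi x))) (schur_lie_den (fun x => p (pi x))) (n1 + n2).
Proof.
move=> hpi hs hp hker [u [hu hsu]] [z [hz hsz]].
have [y hy] := choice_fun (fun j => comm_onto hpi hs (proj1 (hz j))).
pose F := fun k : 'I_n1 + 'I_n2 => match k with inl i => u i | inr j => y j end.
have rs : forall x, kernel pi x -> kernel (fun x => p (pi x)) x.
  by move=> x; rewrite /kernel => ->; apply: (lin0 (hom_lin hp)).
suff : qdim_le (schur_lie_num (fun x => p (pi x))) (schur_lie_den (fun x => p (pi x)))
   #|{: 'I_n1 + 'I_n2}| by rewrite card_sum !card_ord.
apply: (qdim_leT (u := F)).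
  case => [i|j] /=.
    by have [h1 h2] := hu i; split => //; apply: rs.
  have [h1 h2] := hy j; split => //; rewrite /kernel h2; apply/hker; exact: (proj2 (hz j)).
move=> v [hv1 hv2].
have hpv : lie_comm (@full_sub _ g) (@full_sub _ g) (pi v) /\ b (pi v).
  split; last by apply/hker.
  by apply: (hom_comm hpi) hv2.
have [d [w0 [hw0 hd]]] := hsz _ hpv.
pose S := \sum_(j < n2) d j *: y j.
have hS : lie_comm (@full_sub _ f) (@full_sub _ f) S.
  by apply: sub_sum; [apply: lie_comm_sub | move=> j; exact: (proj1 (hy j))].
have hv' : schur_lie_num pi (v - S).
  split; last by apply: subB => //; apply: lie_comm_sub.
  rewrite /kernel (linB (hom_lin hpi)) /S (lin_sum (hom_lin hpi)).
  under eq_bigr do rewrite (proj2 (hy _)).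
  by rewrite hd hw0 addr0 subrr.
have [c [w [hw he]]] := hsu _ hv'.
exists (fun k => match k with inl i => c i | inr j => d j end), w; split.
  by apply: (span_mono _ hw) => t [m [n [hm [hn ->]]]]; exists m, n; do 2!split => //; apply: rs.
rewrite big_sumType /=.
have -> : v = (v - S) + S by rewrite subrK.
by rewrite he addrAC.
Qed.

Lemma step2 (fa f a : leibniz K) (pia : fa -> a) (q : f -> a) n :
  (exists (X : Type) (i : X -> fa), is_free i) ->
  (exists (X : Type) (i : X -> f), is_free i) ->
  is_hom pia -> (forall y, exists x, pia x = y) ->
  is_hom q -> (forall y, exists x, q x = y) ->
  qdim_le (schur_lie_num q) (schur_lie_den q) n ->
  qdim_le (schur_lie_num pia) (schur_lie_den pia) n.
Proof.
move=> [X [i hi]] [X' [i' hi']] hpia hspia hq hsq [u [hu hsu]].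
have [th [hth hth2]] := lift_hom hi hpia hq hsq.
have [ps [hps hps2]] := lift_hom hi' hq hpia hspia.
have hpsD : forall v, schur_lie_den q v -> schur_lie_den pia (ps v).
  move=> v; apply: (hom_comm hps) => // t; rewrite /kernel hps2 => //.
exists (fun k => ps (u k)); split.
  move=> k; have [h1 h2] := hu k; split; first by rewrite /kernel hps2.
  by apply: (hom_comm hps) h2.
move=> v [hv1 hv2].
have hthv : schur_lie_num q (th v).
  split; first by rewrite /kernel hth2.
  by apply: (hom_comm hth) hv2.
have [c [w [hw he]]] := hsu _ hthv.
have hid := lift_id hpia (hom_comp hps hth) (fun x => etrans (hps2 _) (hth2 x)) hv2.
exists c, (ps w - (ps (th v) - v)); split.
  by apply: subB => //; [apply: lie_comm_sub | apply: hpsD].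
rewrite he (linD (hom_lin hps)) (lin_sum (hom_lin hps)).
by rewrite opprB addrA addrC subrK.
Qed.

End Main.

Theorem mainTheorem4 (K : fieldType) (h2 : (2%:R : K) != 0)
  (g : leibniz K) (hg : findim g)
  (b : g -> Prop) (hb : is_ideal b)
  (a : leibniz K) (p : g -> a) (hp : is_hom p)
  (hps : forall y : a, exists x : g, p x = y)
  (hker : forall x : g, p x = 0 <-> b x)
  (fg : leibniz K) (pig : fg -> g) (hpg : free_presentation pig)
  (fa : leibniz K) (pia : fa -> a) (hpa : free_presentation pia) :
  (schur_lie_dim pia <=
     schur_lie_dim pig
     + sdim (fun v : g => lie_comm (@full_sub _ g) (@full_sub _ g) v /\ b v))%N.
Proof.
move: hpg hpa => [freeg hpig hspig] [freea hpia hspia].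
have hq := hom_comp hp hpig.
have hsq : forall y, exists x, p (pig x) = y.
  by move=> y; have [x <-] := hps y; have [x' <-] := hspig x; exists x'.
have [hn1 _] := qdimP (Mfin hpig hspig hg).
have hsub : is_subspace (fun v : g => lie_comm (@full_sub _ g) (@full_sub _ g) v /\ b v).
  exact: sub_and (lie_comm_sub _ _) (proj1 hb).
have [hn2 _] := qdimP (sdim_fin hsub hg).
have h3 := step3 hpig hspig hp hker hn1 hn2.
have h2' := step2 freea freeg hpia hspia hq hsq h3.
have [_ hmin] := qdimP (ex_intro _ _ h2').
exact: hmin _ h2'.
Qed.
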